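(* Let $N$ be even, $p=N/2$, and consider the $(N,p)$-projective code, whose qubits are the projective $p$-faces. Let $\mathcal{E}$ be an error (set of qubits) of weight $|\mathcal{E}|\le N/64$. Then the number of checks indexed by projective $(p+1)$-faces that act on at least one qubit of $\mathcal{E}$ is at least $|\mathcal{E}|\cdot(N/2)\cdot(15/16)$, and the number of checks indexed by projective $(p-1)$-faces that act on at least one qubit of $\mathcal{E}$ is at least $|\mathcal{E}|\cdot N\cdot(15/16)$.
   Context: A $r$-face of the $N$-cube is a word in $\{0,1,*\}^N$ with exactly $r$ symbols $*$. The projective cube identifies a face $x$ with $x+\mathbf{1}$ (complementing every non-$*$ entry, with the convention $*+0=*+1=*$); a projective $r$-face is such an equivalence class. The upper shadow of a face replaces one non-$*$ entry by $*$; the lower shadow replaces one $*$ by $0$ or $1$; these are extended to projective faces by taking equivalence classes. The $(N,p)$-projective code is the CSS code whose qubits are the projective $p$-faces, with one family of checks indexed by projective $(p+1)$-faces $f$ (each acting on the $p$-faces in the lower shadow of $f$) and the other family indexed by projective $(p-1)$-faces $g$ (each acting on the $p$-faces in the upper shadow of $g$). *)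

(* Defs.v *)
From mathcomp Require Import all_boot all_order all_algebra.
Set Implicit Arguments. Unset Strict Implicit. Unset Printing Implicit Defensive.

(* A face of the N-cube: a word in {0,1,*}^N, encoded with
   Some false = 0, Some true = 1, None = *. *)
Definition face (N : nat) := {ffun 'I_N -> option bool}.

Definition nstars N (x : face N) : nat := #|[set i | x i == None]|.

Definition fcomp N (x : face N) : face N :=
  [ffun i => omap negb (x i)].

Definition pclass N (x : face N) : {set face N} := [set x; fcomp x].

Definition projfaces N (r : nat) : {set {set face N}} :=
  [set pclass x | x in [set x : face N | nstars x == r]].

Definition lshadow N (x : face N) : {set face N} :=
  [set y : face N | [exists i, [&& x i == None, y i != None &
             [forall j, (j != i) ==> (y j == x j)]]]].

Definition ushadow N (x : face N) : {set face N} :=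
  [set y : face N | [exists i, [&& x i != None, y i == None &
             [forall j, (j != i) ==> (y j == x j)]]]].

Definition plshadow N (F : {set face N}) : {set {set face N}} :=
  [set pclass y | y in \bigcup_(x in F) lshadow x].
Definition pushadow N (F : {set face N}) : {set {set face N}} :=
  [set pclass y | y in \bigcup_(x in F) ushadow x].

(* Z-checks: indexed by projective (p+1)-faces f, acting on plshadow f;
   those acting on at least one qubit of E *)
Definition hit_checks_up N p (E : {set {set face N}}) : {set {set face N}} :=
  [set f in projfaces N p.+1 | [exists q in E, q \in plshadow f]].
(* X-checks: indexed by projective (p-1)-faces g, acting on pushadow g *)
Definition hit_checks_down N p (E : {set {set face N}}) : {set {set face N}} :=
  [set g in projfaces N p.-1 | [exists q in E, q \in pushadow g]].

(* Main.v *)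
Require Import Defs.
From mathcomp Require Import all_boot all_order all_algebra.
From mathcomp Require Import zify ring lra.
Import Order.TTheory GRing.Theory Num.Theory.
Set Implicit Arguments. Unset Strict Implicit. Unset Printing Implicit Defensive.

Lemma card_inter_bigcup (T U : finType) (A : T -> {set U}) (S : {set U}) (E : {set T}) :
  #|S :&: \bigcup_(q in E) A q| <= \sum_(q in E) #|S :&: A q|.
Proof.
apply: (big_rec2 (fun X n => #|S :&: X| <= n)); first by rewrite setI0 cards0.
move=> i X n _ h; rewrite setIUr.
have := cardsUI (S :&: A i) (S :&: X); lia.
Qed.

Lemma union_bound (T U : finType) (A : T -> {set U}) d (E : {set T}) :
  (forall q, q \in E -> d <= #|A q|) ->
  (forall q q', q \in E -> q' \in E -> q != q' -> forall f1 f2,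
     f1 \in A q -> f1 \in A q' -> f2 \in A q -> f2 \in A q' -> f1 = f2) ->
  #|E| * d <= #|\bigcup_(q in E) A q| + #|E| * #|E|.
Proof.
move: {2}#|E| (erefl #|E|) => n; elim: n E => [|n IH] E hn hd hi.
  by rewrite hn.
have [q qE] : exists q, q \in E by apply/set0Pn; rewrite -card_gt0 hn.
have hE' : #|E :\ q| = n by move: hn; rewrite (cardsD1 q E) qE; lia.
have sub : {subset E :\ q <= E} by move=> x; rewrite inE => /andP[].
have := IH (E :\ q) hE' (fun x hx => hd x (sub x hx))
  (fun x y hx hy => hi x y (sub x hx) (sub y hy)).
rewrite hE' (big_setD1 _ qE) /=.
set X := \bigcup_(i in E :\ q) A i => IH'.
have hI : #|A q :&: X| <= n.
  apply: (leq_trans (card_inter_bigcup A (A q) (E :\ q))).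
  rewrite -hE' -sum1_card; apply: leq_sum => q' hq'.
  apply/card_le1_eqP => f1 f2; rewrite !inE => /andP[h1 h1'] /andP[h2 h2'].
  move: hq'; rewrite !inE => /andP[hqq hq'].
  by apply: (hi q q') => //; rewrite eq_sym.
have := cardsUI (A q) X; have := hd q qE; rewrite hn; nia.
Qed.

Lemma fcompK N (x : face N) : fcomp (fcomp x) = x.
Proof. by apply/ffunP => i; rewrite !ffunE; case: (x i) => // -[]. Qed.

Lemma fcompE N (x : face N) i : fcomp x i = omap negb (x i).
Proof. by rewrite ffunE. Qed.

Lemma pclass_eq N (a b : face N) : pclass a = pclass b -> a = b \/ a = fcomp b.
Proof.
move=> h; have : a \in pclass b by rewrite -h !inE eqxx.
by rewrite !inE => /orP[/eqP|/eqP]; auto.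
Qed.

Lemma pclassC N (x : face N) : pclass (fcomp x) = pclass x.
Proof. by rewrite /pclass fcompK setUC. Qed.

Lemma lsh_ush N (z v : face N) : (z \in lshadow v) = (v \in ushadow z).
Proof.
rewrite !inE; apply/existsP/existsP => -[i /and3P[h1 h2 /forallP h3]]; exists i;
 apply/and3P; split => //; apply/forallP => j; apply/implyP => hj;
 by rewrite eq_sym (implyP (h3 j) hj).
Qed.

Lemma ush_comp N (y z : face N) : y \in ushadow z -> fcomp y \in ushadow (fcomp z).
Proof.
rewrite !inE => /existsP[i /and3P[h1 h2 /forallP h3]]; apply/existsP; exists i.
apply/and3P; split.
- by rewrite ffunE; move: h1; case: (z i).
- by rewrite ffunE (eqP h2).
by apply/forallP => j; apply/implyP => hj; rewrite !ffunE (eqP (implyP (h3 j) hj)).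
Qed.

Lemma lsh_comp N (y z : face N) : y \in lshadow z -> fcomp y \in lshadow (fcomp z).
Proof. by rewrite !lsh_ush; apply: ush_comp. Qed.

Definition near N (y x : face N) := exists i, forall k, k != i -> y k = x k.

Lemma ush_near N (y x : face N) : y \in ushadow x -> near y x.
Proof.
rewrite inE => /existsP[i /and3P[_ _ /forallP h]]; exists i => k hk.
exact/eqP/(implyP (h k) hk).
Qed.

Lemma lsh_near N (y x : face N) : y \in lshadow x -> near y x.
Proof.
rewrite inE => /existsP[i /and3P[_ _ /forallP h]]; exists i => k hk.
exact/eqP/(implyP (h k) hk).
Qed.

Lemma avoid4 (T : finType) (S : {set T}) a b c d : 4 < #|S| ->
  exists2 k, k \in S & [&& k != a, k != b, k != c & k != d].
Proof.
move=> hS; case: (boolP [exists k in S, [&& k != a, k != b, k != c & k != d]]).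
  by move/exists_inP => [k ? ?]; exists k.
move/exists_inPn => h; have : #|S| <= #|[:: a; b; c; d]|.
  apply: subset_leq_card; apply/subsetP => k kS; move: (h k kS); rewrite !inE.
  by case: (k == a); case: (k == b); case: (k == c); case: (k == d).
move=> h2; have h3 := card_size [:: a; b; c; d]; move: (leq_trans h2 h3) hS => /=. lia.
Qed.

Definition nonstar N (x : face N) := [set k | x k != None].

Lemma card_nonstar N (x : face N) : #|nonstar x| = N - nstars x.
Proof.
have h := cardsC [set k | x k == None]; rewrite card_ord in h.
have e : ~: [set k | x k == None] = nonstar x by apply/setP => k; rewrite !inE.
by rewrite e in h; rewrite /nstars; lia.
Qed.

Lemma nonstar_comp N (x : face N) : nonstar (fcomp x) = nonstar x.
Proof. by apply/setP => k; rewrite !inE ffunE; case: (x k). Qed.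

Lemma near_comp_false N (x z y1 y2 : face N) : 4 < #|nonstar z| ->
  near y1 x -> near y1 z -> near y2 x -> near y2 (fcomp z) -> False.
Proof.
move=> hz [i1 h1] [j1 g1] [i2 h2] [j2 g2].
have [k kz /and4P[k1 k2 k3 k4]] := avoid4 i1 j1 i2 j2 hz.
move: kz; rewrite inE.
have e1 : x k = z k by rewrite -h1 // g1.
have e2 : x k = omap negb (z k) by rewrite -h2 // g2 // ffunE.
by rewrite e2 in e1; move: e1; case: (z k) => // -[].
Qed.

Lemma inter_gen N (sh : face N -> {set face N}) (A : {set face N} -> {set {set face N}})
 (shcomp : forall a b, a \in sh b -> fcomp a \in sh (fcomp b))
 (shnear : forall a b, a \in sh b -> near a b)
 (shdet : forall x z y1 y2, x != z -> y1 \in sh x -> y1 \in sh z ->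
     y2 \in sh x -> y2 \in sh z -> y1 = y2)
 (char : forall x f, f \in A (pclass x) -> exists2 y, y \in sh x & f = pclass y)
 x x' f1 f2 : 4 < #|nonstar x'| -> pclass x != pclass x' ->
 f1 \in A (pclass x) -> f1 \in A (pclass x') ->
 f2 \in A (pclass x) -> f2 \in A (pclass x') -> f1 = f2.
Proof.
move=> hx' hne.
have common : forall f, f \in A (pclass x) -> f \in A (pclass x') ->
   exists y, exists z, [/\ y \in sh x, y \in sh z, (z = x' \/ z = fcomp x') & f = pclass y].
  move=> f /char[y hy ->] /char[y' hy' e].
  case: (pclass_eq e) => ey.
    by exists y, x'; subst; split => //; left.
  exists y, (fcomp x'); split => //; last by right.
  by rewrite ey; apply: shcomp.
have xz : forall z, (z = x' \/ z = fcomp x') -> x != z.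
  move=> z [->|->]; apply/eqP => exz; move/eqP: hne; apply.
    by rewrite exz.
  by rewrite exz pclassC.
move=> /common h1 /h1 [y1 [z1 [a1 b1 c1 ->]]] /common h2 /h2 [y2 [z2 [a2 b2 c2 ->]]].
have [ez|nz] := eqVneq z1 z2.
  by subst z2; rewrite (shdet x z1 y1 y2 (xz _ c1)).
exfalso.
have e2 : z2 = fcomp z1.
  case: c1 c2 nz => -> [->|->]; rewrite ?eqxx ?fcompK //.
have hz1 : 4 < #|nonstar z1| by case: c1 => ->; rewrite ?nonstar_comp.
apply: (near_comp_false hz1 (shnear _ _ a1) (shnear _ _ b1) (shnear _ _ a2)).
by rewrite -e2; apply: shnear.
Qed.

Definition Aup N r (q : {set face N}) := [set f in projfaces N r | q \in plshadow f].
Definition Adn N r (q : {set face N}) := [set f in projfaces N r | q \in pushadow f].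

Lemma pclass_mem2 N (w v : face N) : v \in pclass w -> pclass w = pclass v.
Proof. by rewrite !inE => /orP[]/eqP->; rewrite ?pclassC. Qed.

Lemma Aup_char N r (x : face N) f :
  f \in Aup r (pclass x) -> exists2 y, y \in ushadow x & f = pclass y.
Proof.
rewrite inE => /andP[/imsetP[w _ ->] /imsetP[z /bigcupP[v vw zv] e]].
rewrite (pclass_mem2 vw); rewrite lsh_ush in zv.
case: (pclass_eq (esym e)) => ez; subst z; first by exists v.
exists (fcomp v); last by rewrite pclassC.
by rewrite -[x]fcompK; apply: ush_comp.
Qed.

Lemma Adn_char N r (x : face N) f :
  f \in Adn r (pclass x) -> exists2 y, y \in lshadow x & f = pclass y.
Proof.
rewrite inE => /andP[/imsetP[w _ ->] /imsetP[z /bigcupP[v vw zv] e]].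
rewrite (pclass_mem2 vw); rewrite -lsh_ush in zv.
case: (pclass_eq (esym e)) => ez; subst z; first by exists v.
exists (fcomp v); last by rewrite pclassC.
by rewrite -[x]fcompK; apply: lsh_comp.
Qed.

Lemma ush_det N (x z y : face N) : x != z -> y \in ushadow x -> y \in ushadow z ->
  y = [ffun k => if x k == z k then x k else None].
Proof.
move=> xz; rewrite !inE => /existsP[i /and3P[xi yi /forallP hi]]
  /existsP[j /and3P[zj yj /forallP hj]].
have Hi : forall k, k != i -> y k = x k by move=> k hk; exact/eqP/(implyP (hi k) hk).
have Hj : forall k, k != j -> y k = z k by move=> k hk; exact/eqP/(implyP (hj k) hk).
apply/ffunP => k; rewrite ffunE.
have [ki|ki] := eqVneq k i; have [kj|kj] := eqVneq k j.
- subst; case: eqP => [e|]; last by rewrite (eqP yi).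
  case/eqP: xz; apply/ffunP => k.
  have [->|kj] := eqVneq k j; first by [].
  by rewrite -Hi // Hj.
- subst; rewrite (eqP yi) -(Hj _ kj) (eqP yi).
  by case: eqP => // e; move: xi; rewrite e eqxx.
- subst; rewrite (eqP yj) -(Hi _ ki) (eqP yj).
  by case: eqP => // e; move: zj; rewrite -e eqxx.
- by rewrite -(Hi _ ki) -(Hj _ kj) eqxx.
Qed.

Lemma lsh_det N (x z y : face N) : x != z -> y \in lshadow x -> y \in lshadow z ->
  y = [ffun k => if x k == None then z k else x k].
Proof.
move=> xz; rewrite !inE => /existsP[i /and3P[xi yi /forallP hi]]
  /existsP[j /and3P[zj yj /forallP hj]].
have Hi : forall k, k != i -> y k = x k by move=> k hk; exact/eqP/(implyP (hi k) hk).
have Hj : forall k, k != j -> y k = z k by move=> k hk; exact/eqP/(implyP (hj k) hk).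
apply/ffunP => k; rewrite ffunE.
have [ki|ki] := eqVneq k i; have [kj|kj] := eqVneq k j.
- subst; case/eqP: xz; apply/ffunP => k.
  have [->|kj] := eqVneq k j; first by rewrite (eqP xi) (eqP zj).
  by rewrite -Hi // Hj.
- by subst; rewrite xi Hj.
- subst; rewrite -(Hi _ ki); case: eqP => // e.
  by move: yj; rewrite e.
- by rewrite -(Hi _ ki); case: eqP => // _; rewrite Hj.
Qed.

Definition fup N (x : face N) i : face N := [ffun k => if k == i then None else x k].
Definition fdown N (x : face N) i b : face N := [ffun k => if k == i then Some b else x k].

Lemma nstars_fup N (x : face N) i : x i != None -> nstars (fup x i) = (nstars x).+1.
Proof.
move=> h; rewrite /nstars (_ : [set k | fup x i k == None] = i |: [set k | x k == None]).
  by rewrite cardsU1 inE (negbTE h).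
by apply/setP => k; rewrite !inE ffunE; case: (k =P i).
Qed.

Lemma nstars_fdown N (x : face N) i b : x i == None -> nstars x = (nstars (fdown x i b)).+1.
Proof.
move=> h; rewrite /nstars (_ : [set k | x k == None] = i |: [set k | fdown x i b k == None]).
  by rewrite cardsU1 inE ffunE eqxx.
apply/setP => k; rewrite !inE ffunE; case: (k =P i) => [->|] //=; rewrite h.
Qed.

Lemma Aup_card N (x : face N) : 4 < #|nonstar x| ->
  #|nonstar x| <= #|Aup (nstars x).+1 (pclass x)|.
Proof.
move=> hx.
have inj : {in nonstar x &, injective (fun i => pclass (fup x i))}.
  move=> i j hi hj /pclass_eq [e|e].
    have := congr1 (fun f : face N => f i) e; rewrite /= !ffunE eqxx.
    case: (i =P j) => // _ h; by move: hi; rewrite inE -h eqxx.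
  have [k kx /and4P[ki kj _ _]] := avoid4 i j i j hx.
  have := congr1 (fun f : face N => f k) e; rewrite /= !ffunE (negbTE ki) (negbTE kj).
  by move: kx; rewrite inE; case: (x k) => // -[].
rewrite -(card_in_imset inj); apply: subset_leq_card; apply/subsetP => f /imsetP[i hi ->].
have xi : x i != None by move: hi; rewrite inE.
rewrite inE; apply/andP; split.
  by apply/imsetP; exists (fup x i) => //; rewrite inE nstars_fup.
apply/imsetP; exists x => //; apply/bigcupP; exists (fup x i); first by rewrite !inE eqxx.
rewrite inE; apply/existsP; exists i; rewrite !ffunE eqxx xi /=.
by apply/forallP => j; apply/implyP => hj; rewrite ffunE (negbTE hj).
Qed.

Lemma Adn_card N (x : face N) : 4 < #|nonstar x| ->
  #|[set k | x k == None]| * 2 <= #|Adn (nstars x).-1 (pclass x)|.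
Proof.
move=> hx.
pose S := setX [set k | x k == None] [set: bool].
have inj : {in S &, injective (fun ib : 'I_N * bool => pclass (fdown x ib.1 ib.2))}.
  move=> [i b] [j c]; rewrite !inE /= => /andP[hi _] /andP[hj _] /pclass_eq [e|e].
    have := congr1 (fun f : face N => f i) e; rewrite /= !ffunE eqxx.
    case: (i =P j) => [<- [->] //|_ h]; by move: hi; rewrite -h.
  have [k kx /and4P[ki kj _ _]] := avoid4 i j i j hx.
  have := congr1 (fun f : face N => f k) e; rewrite /= !ffunE (negbTE ki) (negbTE kj).
  by move: kx; rewrite inE; case: (x k) => // -[].
have -> : #|[set k | x k == None]| * 2 = #|S| by rewrite cardsX cardsT card_bool.
rewrite -(card_in_imset inj); apply: subset_leq_card; apply/subsetP => f /imsetP[[i b] hi ->].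
have xi : x i == None by move: hi; rewrite !inE => /andP[].
rewrite inE; apply/andP; split.
  by apply/imsetP; exists (fdown x i b) => //; rewrite inE (nstars_fdown b xi).
apply/imsetP; exists x => //; apply/bigcupP; exists (fdown x i b); first by rewrite !inE eqxx.
rewrite inE; apply/existsP; exists i; rewrite /= !ffunE eqxx xi /=.
by apply/forallP => j; apply/implyP => hj; rewrite ffunE (negbTE hj).
Qed.

Lemma hit_up_E N p (E : {set {set face N}}) :
  hit_checks_up p E = \bigcup_(q in E) Aup p.+1 q.
Proof.
apply/setP => f; rewrite inE; apply/andP/bigcupP.
- by move=> [fP /exists_inP[q qE qf]]; exists q => //; rewrite inE fP.
- by move=> [q qE]; rewrite inE => /andP[fP qf]; split => //; apply/exists_inP; exists q.
Qed.

Lemma hit_dn_E N p (E : {set {set face N}}) :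
  hit_checks_down p E = \bigcup_(q in E) Adn p.-1 q.
Proof.
apply/setP => f; rewrite inE; apply/andP/bigcupP.
- by move=> [fP /exists_inP[q qE qf]]; exists q => //; rewrite inE fP.
- by move=> [q qE]; rewrite inE => /andP[fP qf]; split => //; apply/exists_inP; exists q.
Qed.

Unset Implicit Arguments.
Local Open Scope ring_scope.

Theorem mainTheorem4 (N : nat) (E : {set {set face N}}) :
  ~~ odd N ->
  E \subset projfaces N N./2 ->
  (#|E|%:R : rat) <= N%:R / 64 ->
  (#|hit_checks_up N./2 E|%:R : rat) >= #|E|%:R * (N%:R / 2) * (15 / 16) /\
  (#|hit_checks_down N./2 E|%:R : rat) >= #|E|%:R * N%:R * (15 / 16).
Proof.
move=> hodd hsub hsz.
set p := N./2.
have hN : N = (p + p)%N by have := odd_double_half N; rewrite (negbTE hodd) -addnn /=.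
have h64 : (#|E| * 64 <= N)%N by rewrite -(ler_nat rat) natrM -ler_pdivlMr.
have hrep : forall q, q \in E -> exists2 x : face N, nstars x = p & q = pclass x.
  move=> q /(subsetP hsub) /imsetP[x]; rewrite inE => /eqP hx ->; by exists x.
have hbig : forall q, q \in E -> exists2 x : face N, [/\ nstars x = p, #|nonstar x| = p
    & (4 < #|nonstar x|)%N] & q = pclass x.
  move=> q qE; have [x hx ->] := hrep q qE; exists x => //.
  have hp : (0 < #|E|)%N by apply/card_gt0P; exists q.
  rewrite card_nonstar hx; split => //; lia.
have key_up : (#|E| * p <= #|hit_checks_up p E| + #|E| * #|E|)%N.
  rewrite hit_up_E; apply: union_bound.
    by move=> q /hbig[x [h1 h2 h3] ->]; rewrite -{1}h2 -h1; apply: Aup_card.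
  move=> q q' /hbig[x [h1 h2 h3] ->] /hbig[x' [h1' h2' h3'] ->] hne.
  move=> f1 f2; apply: (inter_gen (sh := @ushadow N) (A := Aup p.+1) _ _ _ _ h3' hne) => //.
  - exact: ush_comp.
  - exact: ush_near.
  - by move=> a z y1 y2 az ha hz ha' hz'; rewrite (ush_det az ha hz) (ush_det az ha' hz').
  - exact: Aup_char.
have key_dn : (#|E| * (p * 2) <= #|hit_checks_down p E| + #|E| * #|E|)%N.
  rewrite hit_dn_E; apply: union_bound.
    by move=> q /hbig[x [h1 h2 h3] ->]; rewrite -h1; exact: (Adn_card h3).
  move=> q q' /hbig[x [h1 h2 h3] ->] /hbig[x' [h1' h2' h3'] ->] hne.
  move=> f1 f2; apply: (inter_gen (sh := @lshadow N) (A := Adn p.-1) _ _ _ _ h3' hne) => //.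
  - exact: lsh_comp.
  - exact: lsh_near.
  - by move=> a z y1 y2 az ha hz ha' hz'; rewrite (lsh_det az ha hz) (lsh_det az ha' hz').
  - exact: Adn_char.
have sq : (#|E| * #|E| * 32 <= #|E| * p)%N.
  rewrite -mulnA leq_mul2l; apply/orP; right; lia.
split.
  have k : (#|E| * N * 15 <= #|hit_checks_up p E| * 32)%N by nia.
  move: k; rewrite -(ler_nat rat) !natrM => k; lra.
have k : (#|E| * N * 15 <= #|hit_checks_down p E| * 16)%N by nia.
move: k; rewrite -(ler_nat rat) !natrM => k; lra.
Qed.
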